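(* Every point of $(G/H,\langle\cdot,\cdot\rangle_2)$ is mapped by some isometry of $(G/H,\langle\cdot,\cdot\rangle_2)$ to a point $\pi(g',e)=g'^{-1}H$ with $g'\in\mathcal F$.
   Context: Let $\mathbb{O}=\mathbb{H}\oplus\mathbb{H}\ell$ be the octonions with multiplication $(a+b\ell)(c+d\ell)=(ac-\bar d b)+(da+b\bar c)\ell$. Equip $\operatorname{Im}\mathbb{O}$ with the ordered orthonormal basis $(i,j,k,\ell,i\ell,j\ell,k\ell)$; all matrices are written in this basis. Let $G=G_2=\operatorname{Aut}(\mathbb{O})\subseteq SO(7)$, $K=\{g\in G: g(i)=i\}\cong SU(3)$, $H=\{g\in G: g\text{ preserves the oriented plane with oriented basis }(j,k)\}\cong U(2)$. Let $\mathfrak g\supseteq\mathfrak k$ be Lie algebras, $\langle X,Y\rangle_0=-\operatorname{tr}(XY)$, $\mathfrak p=\mathfrak k^{\perp}$, fix $t>0$, $\phi(Y)=\frac{t}{t+1}Y_{\mathfrak k}+Y_{\mathfrak p}$, and let $\langle\cdot,\cdot\rangle_1$ be the left-invariant metric with $\langle X,Y\rangle_1=\langle X,\phi(Y)\rangle_0$ at $e$. Give $G\times G$ the product metric $\langle\cdot,\cdot\rangle_1\oplus\langle\cdot,\cdot\rangle_1$, let $\pi:G\times G\to G/H$, $\pi(g_1,g_2)=g_1^{-1}g_2H$, be the quotient by the free isometric action $(g,h)\cdot(g_1,g_2)=(gg_1,gg_2h^{-1})$ of $G\times H$, and let $\langle\cdot,\cdot\rangle_2$ be the metric on $G/H$ making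 $\pi$ a Riemannian submersion. Let $\mathcal F\subseteq G$ be the set of matrices $$\begin{pmatrix} \cos\theta & \sin\theta & 0 &0 & 0 & 0 & 0 \\ -\cos\phi \sin\theta & \cos\phi \cos\theta & 0 & -\sin\phi & 0 & 0 & 0\\ 0 & 0 & \cos\phi & 0 & -\sin\phi \cos\theta & -\sin\phi \sin\theta & 0 \\ -\sin \phi \sin \theta & \sin\phi \cos\theta & 0 & \cos\phi & 0 & 0 & 0\\ 0 & 0 & \sin\phi & 0 & \cos\phi \cos\theta & \cos\phi \sin\theta & 0 \\ 0 & 0 & 0 & 0 & -\sin\theta & \cos\theta & 0 \\ 0 & 0 & 0 &0 & 0 & 0 & 1 \end{pmatrix},\quad 0\le\theta,\phi\le\pi/2.$$ *)

(* Defs.v *)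
From Stdlib Require Import Reals Lra ClassicalEpsilon.
Open Scope R_scope.

Definition Mat := nat -> nat -> R.
Definition sum7 (f : nat -> R) : R := sum_f_R0 f 6.
Definition mmul (A B : Mat) : Mat := fun i j => sum7 (fun k => A i k * B k j).
Definition trans (A : Mat) : Mat := fun i j => A j i.
Definition ident : Mat := fun i j => if Nat.eqb i j then 1 else 0.
Definition zeroM : Mat := fun _ _ => 0.
Definition madd (A B : Mat) : Mat := fun i j => A i j + B i j.
Definition msub (A B : Mat) : Mat := fun i j => A i j - B i j.
Definition mscal (a : R) (A : Mat) : Mat := fun i j => a * A i j.
Definition mtr (A : Mat) : R := sum7 (fun i => A i i).
Definition mat_eq7 (A B : Mat) : Prop :=
  forall i j, (i < 7)%nat -> (j < 7)%nat -> A i j = B i j.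

Record quat := mkQ { q0 : R; q1 : R; q2 : R; q3 : R }.
Definition qmul (a b : quat) : quat :=
  mkQ (q0 a * q0 b - q1 a * q1 b - q2 a * q2 b - q3 a * q3 b)
      (q0 a * q1 b + q1 a * q0 b + q2 a * q3 b - q3 a * q2 b)
      (q0 a * q2 b - q1 a * q3 b + q2 a * q0 b + q3 a * q1 b)
      (q0 a * q3 b + q1 a * q2 b - q2 a * q1 b + q3 a * q0 b).
Definition qconj (a : quat) : quat := mkQ (q0 a) (- q1 a) (- q2 a) (- q3 a).
Definition qadd (a b : quat) : quat :=
  mkQ (q0 a + q0 b) (q1 a + q1 b) (q2 a + q2 b) (q3 a + q3 b).
Definition qsub (a b : quat) : quat :=
  mkQ (q0 a - q0 b) (q1 a - q1 b) (q2 a - q2 b) (q3 a - q3 b).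

(* the octonion a + b l *)
Record oct := mkO { oa : quat; ob : quat }.
(* (a + b l)(c + d l) = (ac - conj(d) b) + (d a + b conj(c)) l *)
Definition omul (x y : oct) : oct :=
  mkO (qsub (qmul (oa x) (oa y)) (qmul (qconj (ob y)) (ob x)))
      (qadd (qmul (ob y) (oa x)) (qmul (ob x) (qconj (oa y)))).
Definition oadd (x y : oct) : oct := mkO (qadd (oa x) (oa y)) (qadd (ob x) (ob y)).

(* coordinates in the basis (1, i, j, k, l, il, jl, kl); note il = (0,i) etc. *)
Definition ocoord (x : oct) (n : nat) : R :=
  match n with
  | 0 => q0 (oa x) | 1 => q1 (oa x) | 2 => q2 (oa x) | 3 => q3 (oa x)
  | 4 => q0 (ob x) | 5 => q1 (ob x) | 6 => q2 (ob x) | 7 => q3 (ob x)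
  | _ => 0 end.
Definition of_coords (v : nat -> R) : oct :=
  mkO (mkQ (v 0%nat) (v 1%nat) (v 2%nat) (v 3%nat))
      (mkQ (v 4%nat) (v 5%nat) (v 6%nat) (v 7%nat)).

(* A 7x7 matrix g acts on Im O in the ordered basis (i,j,k,l,il,jl,kl)
   (column c = image of the c-th basis vector); extended by 1 on Re O. *)
Definition oact (g : Mat) (x : oct) : oct :=
  of_coords (fun n => match n with
                      | 0 => ocoord x 0
                      | S r => sum7 (fun c => g r c * ocoord x (S c)) end).
(* infinitesimal version: extended by 0 on Re O *)
Definition dact (X : Mat) (x : oct) : oct :=
  of_coords (fun n => match n with
                      | 0 => 0
                      | S r => sum7 (fun c => X r c * ocoord x (S c)) end).

Definition inG (g : Mat) : Prop :=
  (exists h : Mat, mat_eq7 (mmul g h) ident /\ mat_eq7 (mmul h g) ident) /\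
  (forall x y : oct, oact g (omul x y) = omul (oact g x) (oact g y)).

(* K = { g in G : g(i) = i }  (i = basis vector 0 of Im O) *)
Definition inK (g : Mat) : Prop :=
  inG g /\ forall r, (r < 7)%nat -> g r 0%nat = ident r 0%nat.

(* H = { g in G : g preserves the oriented plane with oriented basis (j,k) }
   (j,k = basis vectors 1,2 of Im O) *)
Definition inH (g : Mat) : Prop :=
  inG g /\
  (forall r, (r < 7)%nat -> r <> 1%nat -> r <> 2%nat ->
     g r 1%nat = 0 /\ g r 2%nat = 0) /\
  g 1%nat 1%nat * g 2%nat 2%nat - g 2%nat 1%nat * g 1%nat 2%nat > 0.

Definition in_g (X : Mat) : Prop :=
  forall x y : oct, dact X (omul x y) = oadd (omul (dact X x) y) (omul x (dact X y)).
Definition in_k (X : Mat) : Prop :=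
  in_g X /\ forall r, (r < 7)%nat -> X r 0%nat = 0.

Definition ip0 (X Y : Mat) : R := - mtr (mmul X Y).

(* Y_k : orthogonal projection (w.r.t. <.,.>_0) of Y onto k; Y_p = Y - Y_k *)
Definition kproj (Y : Mat) : Mat :=
  epsilon (inhabits zeroM)
    (fun Z => in_k Z /\ forall W, in_k W -> ip0 (msub Y Z) W = 0).

Definition phi (t : R) (Y : Mat) : Mat :=
  madd (mscal (t / (t + 1)) (kproj Y)) (msub Y (kproj Y)).
Definition ip1 (t : R) (X Y : Mat) : R := ip0 X (phi t Y).

Definition curveG (c dc : R -> Mat) : Prop :=
  forall s, 0 <= s <= 1 ->
    inG (c s) /\
    forall i j, (i < 7)%nat -> (j < 7)%nat ->
      derivable_pt_lim (fun u => c u i j) s (dc s i j).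

(* speed of (c1,c2) for the left-invariant product metric:
   velocity left-translated to e is c(s)^{-1} c'(s) = c(s)^T c'(s) *)
Definition speed2 (t : R) (c1 dc1 c2 dc2 : R -> Mat) (s : R) : R :=
  let X1 := mmul (trans (c1 s)) (dc1 s) in
  let X2 := mmul (trans (c2 s)) (dc2 s) in
  sqrt (ip1 t X1 X1 + ip1 t X2 X2).

Definition has_length (t : R) (c1 dc1 c2 dc2 : R -> Mat) (L : R) : Prop :=
  exists pr : Riemann_integrable (speed2 t c1 dc1 c2 dc2) 0 1, RiemannInt pr = L.

(* points of G/H are represented by x in G (meaning the coset xH) *)
Definition cls (x y : Mat) : Prop := inH (mmul (trans x) y).   (* xH = yH *)
(* pi(g1,g2) = g1^{-1} g2 H ; for g1 in G <= SO(7), g1^{-1} = g1^T *)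
Definition piGH (g1 g2 : Mat) : Mat := mmul (trans g1) g2.

(* lengths of curves in G x G joining the fibres pi^{-1}(xH) and pi^{-1}(yH);
   the Riemannian-submersion distance of <.,.>_2 is their infimum *)
Definition lengths_between (t : R) (x y : Mat) (L : R) : Prop :=
  exists c1 dc1 c2 dc2,
    curveG c1 dc1 /\ curveG c2 dc2 /\
    cls (piGH (c1 0) (c2 0)) x /\ cls (piGH (c1 1) (c2 1)) y /\
    has_length t c1 dc1 c2 dc2 L.

Definition is_glb (E : R -> Prop) (m : R) : Prop :=
  (forall z, E z -> m <= z) /\ (forall b, (forall z, E z -> b <= z) -> b <= m).

Definition dist2 (t : R) (x y : Mat) (d : R) : Prop :=
  is_glb (lengths_between t x y) d.

Definition isometryGH (t : R) (f : Mat -> Mat) : Prop :=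
  (forall x, inG x -> inG (f x)) /\
  (forall x y, inG x -> inG y -> cls x y -> cls (f x) (f y)) /\
  (forall y, inG y -> exists x, inG x /\ cls (f x) y) /\
  (forall x y d, inG x -> inG y -> (dist2 t x y d <-> dist2 t (f x) (f y) d)).

Definition Fmat (th ph : R) : Mat := fun i j =>
  let c := cos th in let s := sin th in let cp := cos ph in let sp := sin ph in
  match i, j with
  | 0%nat, 0%nat => c
  | 0%nat, 1%nat => s
  | 1%nat, 0%nat => - cp * s
  | 1%nat, 1%nat => cp * c
  | 1%nat, 3%nat => - sp
  | 2%nat, 2%nat => cp
  | 2%nat, 4%nat => - sp * c
  | 2%nat, 5%nat => - sp * s
  | 3%nat, 0%nat => - sp * s
  | 3%nat, 1%nat => sp * c
  | 3%nat, 3%nat => cp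
  | 4%nat, 2%nat => sp
  | 4%nat, 4%nat => cp * c
  | 4%nat, 5%nat => cp * s
  | 5%nat, 4%nat => - s
  | 5%nat, 5%nat => c
  | 6%nat, 6%nat => 1
  | _, _ => 0
  end.

Definition inF (g : Mat) : Prop :=
  exists th ph, 0 <= th <= PI / 2 /\ 0 <= ph <= PI / 2 /\ g = Fmat th ph.

(* Main.v *)
Require Import Defs.
From Stdlib Require Import Reals Lra Lia Nsatz FunctionalExtensionality ClassicalEpsilon.
Open Scope R_scope.

Definition eo (n : nat) : oct := of_coords (fun m => if Nat.eqb m n then 1 else 0).

Ltac oexp := cbv beta iota delta [mmul trans oact dact omul oadd of_coords ocoord sum7 qmul qconj qadd qsub sum_f_R0 oa ob q0 q1 q2 q3 eo Nat.eqb].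
Ltac oexpH H := cbv beta iota delta [mmul trans oact dact omul oadd of_coords ocoord sum7 qmul qconj qadd qsub sum_f_R0 oa ob q0 q1 q2 q3 eo Nat.eqb] in H.

Ltac lt7 i := destruct i as [|[|[|[|[|[|[|i]]]]]]]; [..|exfalso; lia].

Lemma sum7_ext f g : (forall k, (k < 7)%nat -> f k = g k) -> sum7 f = sum7 g.
Proof. intro H. unfold sum7. cbn [sum_f_R0].
rewrite !H by lia. reflexivity. Qed.

Lemma eq7_refl A : mat_eq7 A A. Proof. intros i j _ _; reflexivity. Qed.
Lemma eq7_sym A B : mat_eq7 A B -> mat_eq7 B A. Proof. intros H i j Hi Hj; symmetry; auto. Qed.
Lemma eq7_trans A B C : mat_eq7 A B -> mat_eq7 B C -> mat_eq7 A C.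
Proof. intros H1 H2 i j Hi Hj; rewrite H1, H2; auto. Qed.

Lemma mmul_assoc A B C : mmul (mmul A B) C = mmul A (mmul B C).
Proof. extensionality i; extensionality j. unfold mmul, sum7. cbn [sum_f_R0]. ring. Qed.

Lemma trans_mmul A B : trans (mmul A B) = mmul (trans B) (trans A).
Proof. extensionality i; extensionality j. unfold mmul, trans, sum7. cbn [sum_f_R0]. ring. Qed.

Lemma trans_trans A : trans (trans A) = A.
Proof. reflexivity. Qed.

Lemma mmul_eq7_l A A' B : mat_eq7 A A' -> mat_eq7 (mmul A B) (mmul A' B).
Proof. intros H i j Hi Hj. unfold mmul. apply sum7_ext. intros k Hk. rewrite H; auto. Qed.
Lemma mmul_eq7_r A B B' : mat_eq7 B B' -> mat_eq7 (mmul A B) (mmul A B').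
Proof. intros H i j Hi Hj. unfold mmul. apply sum7_ext. intros k Hk. rewrite H; auto. Qed.
Lemma trans_eq7 A B : mat_eq7 A B -> mat_eq7 (trans A) (trans B).
Proof. intros H i j Hi Hj. unfold trans. auto. Qed.

Lemma mmul_ident_l A : mat_eq7 (mmul ident A) A.
Proof. intros i j Hi Hj. unfold mmul, ident, sum7. lt7 i; cbn [sum_f_R0 Nat.eqb]; ring. Qed.
Lemma mmul_ident_r A : mat_eq7 (mmul A ident) A.
Proof. intros i j Hi Hj. unfold mmul, ident, sum7. lt7 j; cbn [sum_f_R0 Nat.eqb]; ring. Qed.

Lemma mtr_eq7 A B : mat_eq7 A B -> mtr A = mtr B.
Proof. intros H. unfold mtr. apply sum7_ext. intros; apply H; auto. Qed.
Lemma mtr_comm A B : mtr (mmul A B) = mtr (mmul B A).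
Proof. unfold mtr, mmul, sum7. cbn [sum_f_R0]. ring. Qed.

Lemma ip0_eq7 X X' Y Y' : mat_eq7 X X' -> mat_eq7 Y Y' -> ip0 X Y = ip0 X' Y'.
Proof. intros H1 H2. unfold ip0. f_equal. apply mtr_eq7.
eapply eq7_trans. apply mmul_eq7_l, H1. apply mmul_eq7_r, H2. Qed.


Lemma cancel_l a Z : mat_eq7 (mmul a (trans a)) ident -> mat_eq7 (mmul a (mmul (trans a) Z)) Z.
Proof. intro H. rewrite <- mmul_assoc. eapply eq7_trans. apply mmul_eq7_l, H. apply mmul_ident_l. Qed.
Lemma cancel_r a Z : mat_eq7 (mmul a (trans a)) ident -> mat_eq7 (mmul Z (mmul a (trans a))) Z.
Proof. intro H. eapply eq7_trans. apply mmul_eq7_r, H. apply mmul_ident_r. Qed.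

Lemma ip0_conj a X Y : mat_eq7 (mmul (trans a) a) ident ->
  ip0 (mmul a (mmul X (trans a))) (mmul a (mmul Y (trans a))) = ip0 X Y.
Proof. intro Ho. unfold ip0. f_equal.
rewrite !mmul_assoc. rewrite mtr_comm. rewrite !mmul_assoc.
apply mtr_eq7. apply mmul_eq7_r.
eapply eq7_trans. apply (cancel_l (trans a)); exact Ho.
apply (cancel_r (trans a)); exact Ho. Qed.

Definition autom (g : Mat) : Prop := forall x y : oct, oact g (omul x y) = omul (oact g x) (oact g y).

Lemma oact_mmul A B x : oact (mmul A B) x = oact A (oact B x).
Proof. destruct x as [[a0 a1 a2 a3] [b0 b1 b2 b3]]. oexp. f_equal; f_equal; ring. Qed.

Lemma oact_ext A B x : mat_eq7 A B -> oact A x = oact B x.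
Proof. intro H. unfold oact, of_coords. cbn beta iota.
f_equal; f_equal; try reflexivity; apply sum7_ext; intros k Hk; rewrite H by lia; reflexivity. Qed.

Lemma oact_ident x : oact ident x = x.
Proof. destruct x as [[a0 a1 a2 a3] [b0 b1 b2 b3]]. unfold ident. oexp. cbn [Nat.eqb]. f_equal; f_equal; ring. Qed.

Lemma oact_add A x y : oact A (oadd x y) = oadd (oact A x) (oact A y).
Proof. destruct x as [[a0 a1 a2 a3] [b0 b1 b2 b3]]. destruct y as [[c0 c1 c2 c3] [d0 d1 d2 d3]].
oexp. f_equal; f_equal; ring. Qed.

Lemma oact_coord A i j : (i < 7)%nat -> (j < 7)%nat -> ocoord (oact A (eo (S j))) (S i) = A i j.
Proof. intros Hi Hj. unfold eo. lt7 i; lt7 j; oexp; cbn [Nat.eqb]; ring. Qed.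

Lemma oact_det A B : (forall x, oact A x = oact B x) -> mat_eq7 A B.
Proof. intros H i j Hi Hj. rewrite <- (oact_coord A i j), <- (oact_coord B i j) by auto. rewrite H. reflexivity. Qed.

Lemma oact_re A x : ocoord (oact A x) 0 = ocoord x 0.
Proof. reflexivity. Qed.


Lemma re_omul x y : ocoord (omul x y) 0 = ocoord x 0 * ocoord y 0 - sum7 (fun n => ocoord x (S n) * ocoord y (S n)).
Proof. destruct x as [[a0 a1 a2 a3] [b0 b1 b2 b3]]. destruct y as [[c0 c1 c2 c3] [d0 d1 d2 d3]].
unfold sum7; cbn. ring. Qed.

Lemma eo_dot i j : (i < 7)%nat -> (j < 7)%nat ->
  sum7 (fun n => ocoord (eo (S i)) (S n) * ocoord (eo (S j)) (S n)) = ident i j.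
Proof. intros Hi Hj. unfold eo, ident, sum7. lt7 i; lt7 j; cbn; ring. Qed.

Lemma eo_re i : ocoord (eo (S i)) 0 = 0.
Proof. reflexivity. Qed.

Lemma auto_orth g : autom g -> mat_eq7 (mmul (trans g) g) ident.
Proof. intros Hg i j Hi Hj.
pose proof (f_equal (fun o => ocoord o 0) (Hg (eo (S i)) (eo (S j)))) as H. cbv beta in H.
rewrite oact_re, !re_omul, !oact_re, !eo_re, eo_dot in H by auto.
rewrite (sum7_ext _ (fun n => g n i * g n j)) in H.
2:{ intros k Hk. rewrite !oact_coord by auto. reflexivity. }
unfold mmul, trans. lra. Qed.

Lemma inG_auto g : inG g -> autom g.
Proof. intros [_ H]; exact H. Qed.

Lemma inG_orth g : inG g -> mat_eq7 (mmul (trans g) g) ident /\ mat_eq7 (mmul g (trans g)) ident.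
Proof. intros [[h [H1 H2]] Ha]. pose proof (auto_orth g Ha) as Ho. split; auto.
assert (Ht : mat_eq7 (trans g) h).
{ eapply eq7_trans. apply eq7_sym, mmul_ident_r.
  eapply eq7_trans. apply mmul_eq7_r, eq7_sym, H1.
  rewrite <- mmul_assoc. eapply eq7_trans. apply mmul_eq7_l, Ho. apply mmul_ident_l. }
eapply eq7_trans. apply mmul_eq7_r, Ht. exact H1. Qed.

Lemma auto_mmul A B : autom A -> autom B -> autom (mmul A B).
Proof. intros HA HB x y. rewrite !oact_mmul, HB, HA. reflexivity. Qed.

Lemma inG_of_orth g : autom g -> mat_eq7 (mmul g (trans g)) ident -> inG g.
Proof. intros Ha Ho. split; auto. exists (trans g). split; auto. apply auto_orth; auto. Qed.

Lemma oact_cancel g x : mat_eq7 (mmul g (trans g)) ident -> oact g (oact (trans g) x) = x.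
Proof. intro H. rewrite <- oact_mmul. rewrite (oact_ext _ ident) by auto. apply oact_ident. Qed.

Lemma inG_trans g : inG g -> inG (trans g).
Proof. intros Hg. destruct (inG_orth g Hg) as [H1 H2]. pose proof (inG_auto g Hg) as Ha.
apply inG_of_orth; [| exact H1].
intros x y.
assert (Hinj : forall u v, oact g u = oact g v -> u = v).
{ intros u v E. rewrite <- (oact_ident u), <- (oact_ident v).
  rewrite <- (oact_ext (mmul (trans g) g)) by auto. rewrite <- (oact_ext (mmul (trans g) g) ident v) by auto.
  rewrite !oact_mmul, E. reflexivity. }
apply Hinj. rewrite Ha, !oact_cancel by auto. reflexivity. Qed.

Lemma inG_mmul A B : inG A -> inG B -> inG (mmul A B).
Proof. intros HA HB. apply inG_of_orth. apply auto_mmul; apply inG_auto; auto.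
destruct (inG_orth A HA) as [_ HA2]. destruct (inG_orth B HB) as [_ HB2].
rewrite trans_mmul, mmul_assoc. eapply eq7_trans. apply mmul_eq7_r. apply cancel_l; auto. auto. Qed.

Lemma inG_ext A B : mat_eq7 A B -> inG A -> inG B.
Proof. intros E HA. destruct (inG_orth A HA) as [_ H2]. apply inG_of_orth.
intros x y. rewrite !(oact_ext B A) by (apply eq7_sym; auto). apply inG_auto; auto.
eapply eq7_trans. apply mmul_eq7_l, eq7_sym, E. eapply eq7_trans. apply mmul_eq7_r, trans_eq7, eq7_sym, E. auto. Qed.

Lemma autom_ident : autom ident.
Proof. intros x y. rewrite !oact_ident. reflexivity. Qed.

Lemma inG_ident : inG ident.
Proof. apply inG_of_orth. apply autom_ident. eapply eq7_trans. apply mmul_ident_l.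
intros i j Hi Hj. unfold trans, ident. rewrite Nat.eqb_sym. reflexivity. Qed.

Lemma inH_ext A B : mat_eq7 A B -> inH A -> inH B.
Proof. intros E [HG [Hc Hd]]. split; [eapply inG_ext; eauto|]. split.
- intros r Hr H1 H2. rewrite <- !E by lia. auto.
- rewrite <- !E by lia. auto. Qed.

Lemma inH_ident : inH ident.
Proof. split; [apply inG_ident|]. split.
- intros r Hr H1 H2. unfold ident. lt7 r; cbn; try lia; split; reflexivity.
- unfold ident; cbn. lra. Qed.

Lemma cls_ext_r x y y' : mat_eq7 y y' -> cls x y -> cls x y'.
Proof. unfold cls. intros E H. eapply inH_ext; [|exact H]. apply mmul_eq7_r; auto. Qed.

Definition Zc (u1 u2 u3 u4 u5 u6 u7 u8 : R) : Mat := fun i j =>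
  match i, j with
  | 1%nat,2%nat => u3 - u8 | 1%nat,3%nat => - u2 | 1%nat,4%nat => - u1 | 1%nat,5%nat => u5 | 1%nat,6%nat => - u4
  | 2%nat,1%nat => u8 - u3 | 2%nat,3%nat => u1 | 2%nat,4%nat => - u2 | 2%nat,5%nat => - u4 | 2%nat,6%nat => - u5
  | 3%nat,1%nat => u2 | 3%nat,2%nat => - u1 | 3%nat,4%nat => - u3 | 3%nat,5%nat => u7 | 3%nat,6%nat => - u6
  | 4%nat,1%nat => u1 | 4%nat,2%nat => u2 | 4%nat,3%nat => u3 | 4%nat,5%nat => - u6 | 4%nat,6%nat => - u7
  | 5%nat,1%nat => - u5 | 5%nat,2%nat => u4 | 5%nat,3%nat => - u7 | 5%nat,4%nat => u6 | 5%nat,6%nat => - u8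
  | 6%nat,1%nat => u4 | 6%nat,2%nat => u5 | 6%nat,3%nat => u6 | 6%nat,4%nat => u7 | 6%nat,5%nat => u8
  | _, _ => 0 end.

Lemma Zc_ink u1 u2 u3 u4 u5 u6 u7 u8 : in_k (Zc u1 u2 u3 u4 u5 u6 u7 u8).
Proof. split.
- intros [[a0 a1 a2 a3] [b0 b1 b2 b3]] [[c0 c1 c2 c3] [d0 d1 d2 d3]].
  unfold Zc. oexp. f_equal; f_equal; ring.
- intros r Hr. unfold Zc. lt7 r; reflexivity. Qed.

Lemma ink_span W : in_k W ->
  mat_eq7 W (Zc (W 4 1)%nat (W 4 2)%nat (W 4 3)%nat (W 6 1)%nat (W 6 2)%nat (W 6 3)%nat (W 6 4)%nat (W 6 5)%nat).
Proof. intros [Hg H0].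
pose proof (Hg (eo 1) (eo 2)) as E1. pose proof (Hg (eo 1) (eo 4)) as E2.
pose proof (Hg (eo 1) (eo 6)) as E3. pose proof (Hg (eo 2) (eo 4)) as E4.
pose proof (Hg (eo 2) (eo 2)) as E5. pose proof (Hg (eo 4) (eo 4)) as E6.
clear Hg. oexpH E1; oexpH E2; oexpH E3; oexpH E4; oexpH E5; oexpH E6.
injection E1; injection E2; injection E3; injection E4; injection E5; injection E6; intros.
pose proof (H0 0%nat ltac:(lia)). pose proof (H0 1%nat ltac:(lia)). pose proof (H0 2%nat ltac:(lia)).
pose proof (H0 3%nat ltac:(lia)). pose proof (H0 4%nat ltac:(lia)). pose proof (H0 5%nat ltac:(lia)).
pose proof (H0 6%nat ltac:(lia)).
clear E1 E2 E3 E4 E5 E6 H0.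
intros i j Hi Hj. unfold Zc. lt7 i; lt7 j; lra. Qed.

Definition Lk (Y : Mat) (k : nat) : R :=
  ip0 Y (match k with
         | 1%nat => Zc 1 0 0 0 0 0 0 0 | 2%nat => Zc 0 1 0 0 0 0 0 0
         | 3%nat => Zc 0 0 1 0 0 0 0 0 | 4%nat => Zc 0 0 0 1 0 0 0 0
         | 5%nat => Zc 0 0 0 0 1 0 0 0 | 6%nat => Zc 0 0 0 0 0 1 0 0
         | 7%nat => Zc 0 0 0 0 0 0 1 0 | _ => Zc 0 0 0 0 0 0 0 1 end).

Definition Pk (Y : Mat) : Mat :=
  Zc (Lk Y 1 / 4) (Lk Y 2 / 4) ((2 * Lk Y 3 + Lk Y 8) / 6) (Lk Y 4 / 4)
     (Lk Y 5 / 4) (Lk Y 6 / 4) (Lk Y 7 / 4) ((Lk Y 3 + 2 * Lk Y 8) / 6).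

Ltac mexp := cbv beta iota delta [ip0 mtr mmul msub madd mscal trans sum7 sum_f_R0 Zc Lk Pk].

Lemma Pk_orth Y w1 w2 w3 w4 w5 w6 w7 w8 :
  ip0 (msub Y (Pk Y)) (Zc w1 w2 w3 w4 w5 w6 w7 w8) = 0.
Proof. mexp. field. Qed.

Lemma kspec_Pk Y : in_k (Pk Y) /\ forall W, in_k W -> ip0 (msub Y (Pk Y)) W = 0.
Proof. split. apply Zc_ink. intros W HW.
rewrite (ip0_eq7 _ (msub Y (Pk Y)) _ _ (eq7_refl _) (ink_span W HW)). apply Pk_orth. Qed.

Lemma kspec_unique Y Z : in_k Z -> (forall W, in_k W -> ip0 (msub Y Z) W = 0) -> mat_eq7 Z (Pk Y).
Proof. intros HZ HO.
pose proof (ink_span Z HZ) as E.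
assert (HO' : forall w1 w2 w3 w4 w5 w6 w7 w8, ip0 (msub Y (Zc (Z 4 1)%nat (Z 4 2)%nat (Z 4 3)%nat (Z 6 1)%nat (Z 6 2)%nat (Z 6 3)%nat (Z 6 4)%nat (Z 6 5)%nat)) (Zc w1 w2 w3 w4 w5 w6 w7 w8) = 0).
{ intros. rewrite <- (HO _ (Zc_ink w1 w2 w3 w4 w5 w6 w7 w8)). apply ip0_eq7; [|apply eq7_refl].
  intros i j Hi Hj. unfold msub. rewrite <- E by auto. reflexivity. }
eapply eq7_trans. exact E.
generalize (HO' 1 0 0 0 0 0 0 0) (HO' 0 1 0 0 0 0 0 0) (HO' 0 0 1 0 0 0 0 0) (HO' 0 0 0 1 0 0 0 0)
  (HO' 0 0 0 0 1 0 0 0) (HO' 0 0 0 0 0 1 0 0) (HO' 0 0 0 0 0 0 1 0) (HO' 0 0 0 0 0 0 0 1).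
clear HO' HO E HZ.
set (z1 := Z 4%nat 1%nat). set (z2 := Z 4%nat 2%nat). set (z3 := Z 4%nat 3%nat). set (z4 := Z 6%nat 1%nat).
set (z5 := Z 6%nat 2%nat). set (z6 := Z 6%nat 3%nat). set (z7 := Z 6%nat 4%nat). set (z8 := Z 6%nat 5%nat).
clearbody z1 z2 z3 z4 z5 z6 z7 z8.
mexp. intros H1 H2 H3 H4 H5 H6 H7 H8 i j Hi Hj. lt7 i; lt7 j; lra. Qed.

Lemma kproj_eq Y : mat_eq7 (kproj Y) (Pk Y).
Proof. unfold kproj. apply kspec_unique; apply (epsilon_spec (inhabits zeroM) (fun Z => in_k Z /\ forall W, in_k W -> ip0 (msub Y Z) W = 0)); exists (Pk Y); apply kspec_Pk. Qed.

Lemma kproj_unique Y Z : in_k Z -> (forall W, in_k W -> ip0 (msub Y Z) W = 0) -> mat_eq7 Z (kproj Y).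
Proof. intros. eapply eq7_trans. apply kspec_unique; eauto. apply eq7_sym, kproj_eq. Qed.

Lemma kproj_spec Y : in_k (kproj Y) /\ forall W, in_k W -> ip0 (msub Y (kproj Y)) W = 0.
Proof. unfold kproj. apply (epsilon_spec (inhabits zeroM) (fun Z => in_k Z /\ forall W, in_k W -> ip0 (msub Y Z) W = 0)); exists (Pk Y); apply kspec_Pk. Qed.

Definition good (a : Mat) : Prop :=
  inG a /\ exists sg, (sg = 1 \/ sg = -1) /\
    forall m, (m < 7)%nat -> a m 0%nat = sg * ident m 0%nat /\ a 0%nat m = sg * ident 0%nat m.

Lemma good_trans a : good a -> good (trans a).
Proof. intros [HG [sg [Hs Hr]]]. split. apply inG_trans; auto.
exists sg. split; auto. intros m Hm. destruct (Hr m Hm) as [A B]. unfold trans.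
assert (ident 0%nat m = ident m 0%nat) as E by (unfold ident; rewrite Nat.eqb_sym; reflexivity).
rewrite A, B, E. split; auto. Qed.

Definition cnj (a X : Mat) : Mat := mmul a (mmul X (trans a)).

Lemma dact_mmul_l A B z : dact (mmul A B) z = oact A (dact B z).
Proof. destruct z as [[a0 a1 a2 a3] [b0 b1 b2 b3]]. oexp. f_equal; f_equal; ring. Qed.
Lemma dact_mmul_r A B z : dact (mmul A B) z = dact A (oact B z).
Proof. destruct z as [[a0 a1 a2 a3] [b0 b1 b2 b3]]. oexp. f_equal; f_equal; ring. Qed.

Lemma dact_conj a W z : dact (cnj a W) z = oact a (dact W (oact (trans a) z)).
Proof. unfold cnj. rewrite dact_mmul_l, dact_mmul_r. reflexivity. Qed.

Lemma oact_add' A x y : oact A (oadd x y) = oadd (oact A x) (oact A y).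
Proof. apply oact_add. Qed.

Lemma ink_conj a W : good a -> in_k W -> in_k (cnj a W).
Proof. intros [HG [sg [Hs Hr]]] [Hg H0]. split.
- intros x y. destruct (inG_orth a HG) as [_ Ho].
  rewrite !dact_conj. rewrite (inG_auto (trans a)) by (apply inG_trans; auto).
  rewrite Hg, oact_add, !(inG_auto a HG), !oact_cancel by auto. reflexivity.
- intros r Hr7. unfold cnj, mmul, trans, sum7. cbn [sum_f_R0].
  destruct (Hr 0%nat ltac:(lia)) as [_ A0]. destruct (Hr 1%nat ltac:(lia)) as [_ A1].
  destruct (Hr 2%nat ltac:(lia)) as [_ A2]. destruct (Hr 3%nat ltac:(lia)) as [_ A3].
  destruct (Hr 4%nat ltac:(lia)) as [_ A4]. destruct (Hr 5%nat ltac:(lia)) as [_ A5].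
  destruct (Hr 6%nat ltac:(lia)) as [_ A6].
  rewrite A0, A1, A2, A3, A4, A5, A6. unfold ident; cbn [Nat.eqb].
  rewrite !H0 by lia. ring. Qed.

Lemma conj_msub a A B : msub (cnj a A) (cnj a B) = cnj a (msub A B).
Proof. extensionality i; extensionality j. unfold cnj, msub, mmul, trans, sum7. cbn [sum_f_R0]. ring. Qed.

Lemma conj_trans_cancel a W : mat_eq7 (mmul a (trans a)) ident -> mat_eq7 W (cnj a (cnj (trans a) W)).
Proof. intro H. unfold cnj. rewrite trans_trans. rewrite !mmul_assoc.
apply eq7_sym. eapply eq7_trans. apply cancel_l; auto. apply cancel_r; auto. Qed.

Lemma kproj_conj a Y : good a -> mat_eq7 (kproj (cnj a Y)) (cnj a (kproj Y)).
Proof. intros Ha. apply eq7_sym. apply kproj_unique.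
- apply ink_conj; auto. apply kproj_spec.
- intros W HW. destruct Ha as [HG Hs]. destruct (inG_orth a HG) as [Ho1 Ho2].
  rewrite conj_msub.
  rewrite (ip0_eq7 _ (cnj a (msub Y (kproj Y))) _ (cnj a (cnj (trans a) W))); [|apply eq7_refl|apply conj_trans_cancel; auto].
  unfold cnj at 1 2. rewrite ip0_conj by auto.
  apply kproj_spec. apply ink_conj; auto. apply good_trans. split; auto. Qed.

Lemma phi_conj t a Y : good a -> mat_eq7 (phi t (cnj a Y)) (cnj a (phi t Y)).
Proof. intros Ha. pose proof (kproj_conj a Y Ha) as E.
assert (Hl : cnj a (phi t Y) = madd (mscal (t/(t+1)) (cnj a (kproj Y))) (msub (cnj a Y) (cnj a (kproj Y)))).
{ extensionality i; extensionality j. unfold phi, cnj, madd, mscal, msub, mmul, trans, sum7. cbn [sum_f_R0]. ring. }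
rewrite Hl. unfold phi. intros i j Hi Hj. unfold madd, mscal, msub. rewrite E by auto. reflexivity. Qed.

Lemma ip1_conj t a X : good a -> ip1 t (cnj a X) (cnj a X) = ip1 t X X.
Proof. intros Ha. unfold ip1. rewrite (ip0_eq7 _ (cnj a X) _ (cnj a (phi t X))); [|apply eq7_refl|apply phi_conj; auto].
unfold cnj. apply ip0_conj. destruct Ha as [HG _]. apply (proj1 (inG_orth a HG)). Qed.

Lemma dlim_mulc f s l c : derivable_pt_lim f s l -> derivable_pt_lim (fun u => f u * c) s (l * c).
Proof. intro H. replace (l * c) with (l * c + f s * 0) by ring.
apply (derivable_pt_lim_mult f (fun _ => c)); auto. apply derivable_pt_lim_const. Qed.

Lemma dlim_sum7 (F : R -> nat -> R) dF s : (forall k, (k < 7)%nat -> derivable_pt_lim (fun u => F u k) s (dF k)) ->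
  derivable_pt_lim (fun u => sum7 (F u)) s (sum7 dF).
Proof. intro H. unfold sum7. cbn [sum_f_R0].
repeat apply (derivable_pt_lim_plus (fun u => _) (fun u => _)); apply H; lia. Qed.

Lemma curve_xform b c1 dc1 : good b -> curveG c1 dc1 ->
  curveG (fun s => mmul (c1 s) b) (fun s => mmul (dc1 s) b).
Proof. intros [Hb _] Hc s Hs. destruct (Hc s Hs) as [HG HD]. split.
- apply inG_mmul; auto.
- intros i j Hi Hj. unfold mmul. apply (dlim_sum7 (fun u k => c1 u i k * b k j)).
  intros k Hk. apply dlim_mulc. apply HD; auto. Qed.

Lemma cls_lmul a p x : mat_eq7 (mmul (trans a) a) ident -> cls p x -> cls (mmul a p) (mmul a x).
Proof. intros Ho H. unfold cls in *. eapply inH_ext; [|exact H].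
rewrite trans_mmul, mmul_assoc. apply mmul_eq7_r. rewrite <- mmul_assoc.
apply eq7_sym. eapply eq7_trans. apply mmul_eq7_l, Ho. apply mmul_ident_l. Qed.

Lemma speed_xform t b c1 dc1 c2 dc2 : good b ->
  speed2 t (fun s => mmul (c1 s) b) (fun s => mmul (dc1 s) b) c2 dc2 = speed2 t c1 dc1 c2 dc2.
Proof. intros Hb. extensionality s. unfold speed2. f_equal. f_equal.
assert (E : mmul (trans (mmul (c1 s) b)) (mmul (dc1 s) b) = cnj (trans b) (mmul (trans (c1 s)) (dc1 s))).
{ unfold cnj. rewrite trans_mmul, trans_trans, !mmul_assoc. reflexivity. }
rewrite E. apply ip1_conj. apply good_trans; auto. Qed.

Lemma lb_xform t b x y L : good b -> lengths_between t x y L ->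
  lengths_between t (mmul (trans b) x) (mmul (trans b) y) L.
Proof. intros Hb [c1 [dc1 [c2 [dc2 [H1 [H2 [H3 [H4 H5]]]]]]]].
assert (Ho : mat_eq7 (mmul (trans (trans b)) (trans b)) ident) by (apply (proj2 (inG_orth b (proj1 Hb)))).
exists (fun s => mmul (c1 s) b), (fun s => mmul (dc1 s) b), c2, dc2.
split; [apply curve_xform; auto|]. split; auto.
unfold piGH in *. rewrite !trans_mmul, !mmul_assoc.
split; [apply cls_lmul; auto|]. split; [apply cls_lmul; auto|].
unfold has_length in *. rewrite speed_xform; auto. Qed.

Lemma lb_ext t x y x' y' L : mat_eq7 x x' -> mat_eq7 y y' -> lengths_between t x y L -> lengths_between t x' y' L.
Proof. intros Ex Ey [c1 [dc1 [c2 [dc2 [H1 [H2 [H3 [H4 H5]]]]]]]].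
exists c1, dc1, c2, dc2. split; [auto|split; [auto|split; [eapply cls_ext_r; eauto|split; [eapply cls_ext_r; eauto|auto]]]]. Qed.

Lemma lb_equiv t a x y L : good a ->
  (lengths_between t x y L <-> lengths_between t (mmul a x) (mmul a y) L).
Proof. intros Ha. destruct (inG_orth a (proj1 Ha)) as [Ho1 Ho2]. split; intro H.
- apply (lb_xform t (trans a)) in H; [|apply good_trans; auto]. exact H.
- apply (lb_xform t a) in H; auto. eapply lb_ext; [| |exact H].
  + rewrite <- mmul_assoc. eapply eq7_trans. apply mmul_eq7_l, Ho1. apply mmul_ident_l.
  + rewrite <- mmul_assoc. eapply eq7_trans. apply mmul_eq7_l, Ho1. apply mmul_ident_l. Qed.

Lemma isometry_good t a : good a -> isometryGH t (mmul a).
Proof. intros Ha. destruct (inG_orth a (proj1 Ha)) as [Ho1 Ho2]. split; [|split; [|split]].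
- intros x Hx. apply inG_mmul; auto. apply Ha.
- intros x y Hx Hy H. apply cls_lmul; auto.
- intros y Hy. exists (mmul (trans a) y). split. apply inG_mmul; auto. apply inG_trans, Ha.
  unfold cls. eapply inH_ext; [|apply inH_ident].
  apply eq7_sym. eapply eq7_trans. apply mmul_eq7_l, trans_eq7. apply cancel_l; auto.
  apply (proj1 (inG_orth y Hy)).
- intros x y d Hx Hy. unfold dist2, is_glb. split.
  + intros [A B]. split.
    * intros z Hz. apply A. apply (lb_equiv t a x y z Ha). auto.
    * intros b Hb. apply B. intros z Hz. apply Hb. apply (lb_equiv t a x y z Ha). auto.
  + intros [A B]. split.
    * intros z Hz. apply A. apply (lb_equiv t a x y z Ha). auto.
    * intros b Hb. apply B. intros z Hz. apply Hb. apply (lb_equiv t a x y z Ha). auto. Qed.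

Definition Fm (c s cp sp : R) : Mat := fun i j =>
  match i, j with
  | 0%nat, 0%nat => c
  | 0%nat, 1%nat => s
  | 1%nat, 0%nat => - cp * s
  | 1%nat, 1%nat => cp * c
  | 1%nat, 3%nat => - sp
  | 2%nat, 2%nat => cp
  | 2%nat, 4%nat => - sp * c
  | 2%nat, 5%nat => - sp * s
  | 3%nat, 0%nat => - sp * s
  | 3%nat, 1%nat => sp * c
  | 3%nat, 3%nat => cp
  | 4%nat, 2%nat => sp
  | 4%nat, 4%nat => cp * c
  | 4%nat, 5%nat => cp * s
  | 5%nat, 4%nat => - s
  | 5%nat, 5%nat => c
  | 6%nat, 6%nat => 1
  | _, _ => 0
  end.

Lemma Fmat_Fm th ph : Fmat th ph = Fm (cos th) (sin th) (cos ph) (sin ph).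
Proof. reflexivity. Qed.

Lemma Fm_inG c s cp sp : c*c+s*s = 1 -> cp*cp+sp*sp = 1 -> inG (Fm c s cp sp).
Proof. intros H1 H2. apply inG_of_orth.
- intros [[a0 a1 a2 a3] [b0 b1 b2 b3]] [[c0 c1 c2 c3] [d0 d1 d2 d3]].
  unfold Fm. oexp. f_equal; f_equal; nsatz.
- intros i j Hi Hj. unfold Fm, ident. lt7 i; lt7 j; cbv [mmul trans sum7 sum_f_R0 Nat.eqb]; clear Hi Hj; nsatz. Qed.

Definition Rot1 (u v : R) : Mat := fun i j =>
  match i, j with
  | 1%nat,1%nat => u | 2%nat,1%nat => v | 1%nat,2%nat => -v | 2%nat,2%nat => u
  | 5%nat,5%nat => u | 6%nat,5%nat => v | 5%nat,6%nat => -v | 6%nat,6%nat => u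
  | 0%nat,0%nat => 1 | 3%nat,3%nat => 1 | 4%nat,4%nat => 1
  | _,_ => 0 end.

Lemma R1_inG u v : u*u+v*v = 1 -> inG (Rot1 u v).
Proof. intros H. apply inG_of_orth.
- intros [[a0 a1 a2 a3] [b0 b1 b2 b3]] [[c0 c1 c2 c3] [d0 d1 d2 d3]].
  unfold Rot1. oexp. f_equal; f_equal; nsatz.
- intros i j Hi Hj. unfold Rot1, ident. lt7 i; lt7 j; cbv [mmul trans sum7 sum_f_R0 Nat.eqb]; clear Hi Hj; nsatz. Qed.

Definition Lq (q0 q1 q2 q3 : R) : Mat := fun i j =>
  match i, j with
  | 0%nat,0%nat => 1 | 1%nat,1%nat => 1 | 2%nat,2%nat => 1
  | 3%nat,3%nat => q0 | 3%nat,4%nat => -q1 | 3%nat,5%nat => -q2 | 3%nat,6%nat => -q3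
  | 4%nat,3%nat => q1 | 4%nat,4%nat => q0 | 4%nat,5%nat => -q3 | 4%nat,6%nat => q2
  | 5%nat,3%nat => q2 | 5%nat,4%nat => q3 | 5%nat,5%nat => q0 | 5%nat,6%nat => -q1
  | 6%nat,3%nat => q3 | 6%nat,4%nat => -q2 | 6%nat,5%nat => q1 | 6%nat,6%nat => q0
  | _,_ => 0 end.

Lemma Lq_inG q0 q1 q2 q3 : q0*q0+q1*q1+q2*q2+q3*q3 = 1 -> inG (Lq q0 q1 q2 q3).
Proof. intros H. apply inG_of_orth.
- intros [[a0 a1 a2 a3] [b0 b1 b2 b3]] [[c0 c1 c2 c3] [d0 d1 d2 d3]].
  unfold Lq. oexp. f_equal; f_equal; nsatz.
- intros i j Hi Hj. unfold Lq, ident. lt7 i; lt7 j; cbv [mmul trans sum7 sum_f_R0 Nat.eqb]; clear Hi Hj; nsatz. Qed.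

Lemma le_half_pi th : 0 <= th <= PI -> 0 <= cos th -> th <= PI / 2.
Proof. intros [H1 H2] Hc. destruct (Rle_dec th (PI/2)) as [H|H]; auto.
exfalso. assert (cos th < 0). { apply cos_lt_0; pose proof PI_RGT_0; lra. } lra. Qed.

Lemma angles c r m : 0 <= c <= 1 -> 0 <= r -> 0 <= m -> c*c + r*r + m*m = 1 ->
  exists th ph, 0 <= th <= PI/2 /\ 0 <= ph <= PI/2 /\ cos th = c /\ cos ph * sin th = r /\ sin ph * sin th = m.
Proof. intros Hc Hr Hm Hs.
pose proof (acos_bound c) as Hb. pose proof (cos_acos c ltac:(lra)) as Hcos.
set (th := acos c) in *.
assert (HS0 : 0 <= sin th) by (apply sin_ge_0; lra).
assert (HS2 : sin th * sin th = r*r + m*m).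
{ pose proof (sin2_cos2 th) as E. unfold Rsqr in E. rewrite Hcos in E. lra. }
assert (Hth : 0 <= th <= PI/2) by (split; [lra|apply le_half_pi; lra]).
destruct (Req_dec (sin th) 0) as [Z|NZ].
- exists th, 0. rewrite Z in *. assert (r = 0) by nra. assert (m = 0) by nra. subst r m.
  split; auto. split. pose proof PI_RGT_0; lra. rewrite cos_0, sin_0. split; auto. split; ring.
- set (S := sin th) in *. assert (HSp : 0 < S) by lra.
  assert (Hy : 0 <= r / S <= 1).
  { split. unfold Rdiv; apply Rmult_le_pos; [lra | left; apply Rinv_0_lt_compat; lra]. apply (Rmult_le_reg_r S); auto. unfold Rdiv. rewrite Rmult_assoc, Rinv_l by lra. nra. }
  pose proof (acos_bound (r/S)) as Hb2. pose proof (cos_acos (r/S) ltac:(lra)) as Hcos2.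
  set (ph := acos (r/S)) in *.
  assert (HP0 : 0 <= sin ph) by (apply sin_ge_0; lra).
  exists th, ph. split; auto. split. split; [lra|apply le_half_pi; lra].
  split; auto. change (sin th) with S. split. rewrite Hcos2. field. lra.
  apply Rsqr_inj. nra. auto. unfold Rsqr.
  pose proof (sin2_cos2 ph) as E. unfold Rsqr in E. rewrite Hcos2 in E.
  replace (sin ph * S * (sin ph * S)) with ((sin ph * sin ph) * (S * S)) by ring.
  replace (sin ph * sin ph) with (1 - r / S * (r / S)) by lra.
  field_simplify; [|lra]. nra. Qed.

Lemma choose_uv w1 w2 sg : sg*sg = 1 -> exists u v r, u*u+v*v = 1 /\ 0 <= r /\ r*r = w1*w1+w2*w2 /\
  u*w1 - v*w2 = -sg*r /\ v*w1 + u*w2 = 0.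
Proof. intros Hsg. set (r := sqrt (w1*w1+w2*w2)).
assert (Hr0 : 0 <= r) by apply sqrt_pos.
assert (Hr : r*r = w1*w1+w2*w2) by (apply sqrt_sqrt; nra).
destruct (Req_dec r 0) as [Z|NZ].
- exists 1, 0, r. rewrite Z in *. assert (w1 = 0) by nra. assert (w2 = 0) by nra. subst w1 w2.
  repeat split; try lra; ring.
- exists (-sg*w1/r), (sg*w2/r), r. split; [|split; [auto|split; [auto|split]]].
  + transitivity (sg*sg*(w1*w1+w2*w2)/(r*r)). field; auto. rewrite Hsg, <- Hr. field; auto.
  + transitivity (-(sg*(w1*w1+w2*w2))/r). field; auto. rewrite <- Hr. field; auto.
  + field; auto. Qed.

Lemma choose_q b0 b1 b2 b3 sg : sg*sg = 1 -> exists q0 q1 q2 q3 m,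
  q0*q0+q1*q1+q2*q2+q3*q3 = 1 /\ 0 <= m /\ m*m = b0*b0+b1*b1+b2*b2+b3*b3 /\
  q0*b0 - q1*b1 - q2*b2 - q3*b3 = -sg*m /\ q1*b0 + q0*b1 - q3*b2 + q2*b3 = 0 /\
  q2*b0 + q3*b1 + q0*b2 - q1*b3 = 0 /\ q3*b0 - q2*b1 + q1*b2 + q0*b3 = 0.
Proof. intros Hsg. set (m := sqrt (b0*b0+b1*b1+b2*b2+b3*b3)).
assert (Hm0 : 0 <= m) by apply sqrt_pos.
assert (Hm : m*m = b0*b0+b1*b1+b2*b2+b3*b3) by (apply sqrt_sqrt; nra).
destruct (Req_dec m 0) as [Z|NZ].
- exists 1, 0, 0, 0, m. rewrite Z in *. assert (b0 = 0) by nra. assert (b1 = 0) by nra.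
  assert (b2 = 0) by nra. assert (b3 = 0) by nra. subst b0 b1 b2 b3.
  repeat split; try lra; ring.
- exists (-sg*b0/m), (sg*b1/m), (sg*b2/m), (sg*b3/m), m.
  split; [|split; [auto|split; [auto|split; [|split; [|split]]]]].
  + transitivity (sg*sg*(b0*b0+b1*b1+b2*b2+b3*b3)/(m*m)). field; auto. rewrite Hsg, <- Hm. field; auto.
  + transitivity (-(sg*(b0*b0+b1*b1+b2*b2+b3*b3))/m). field; auto. rewrite <- Hm. field; auto.
  + field; auto.
  + field; auto.
  + field; auto. Qed.

Lemma hx_col (x : Mat) sg u v q0 q1 q2 q3 c s cp sp :
  u * x 0%nat 1%nat - v * x 0%nat 2%nat = -sg*(cp*s) -> v * x 0%nat 1%nat + u * x 0%nat 2%nat = 0 ->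
  q0 * x 0%nat 3%nat - q1 * x 0%nat 4%nat - q2 * (u * x 0%nat 5%nat - v * x 0%nat 6%nat) - q3 * (v * x 0%nat 5%nat + u * x 0%nat 6%nat) = -sg*(sp*s) ->
  q1 * x 0%nat 3%nat + q0 * x 0%nat 4%nat - q3 * (u * x 0%nat 5%nat - v * x 0%nat 6%nat) + q2 * (v * x 0%nat 5%nat + u * x 0%nat 6%nat) = 0 ->
  q2 * x 0%nat 3%nat + q3 * x 0%nat 4%nat + q0 * (u * x 0%nat 5%nat - v * x 0%nat 6%nat) - q1 * (v * x 0%nat 5%nat + u * x 0%nat 6%nat) = 0 ->
  q3 * x 0%nat 3%nat - q2 * x 0%nat 4%nat + q1 * (u * x 0%nat 5%nat - v * x 0%nat 6%nat) + q0 * (v * x 0%nat 5%nat + u * x 0%nat 6%nat) = 0 ->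
  x 0%nat 0%nat = sg * c ->
  forall k, (k < 7)%nat -> mmul (mmul (Lq q0 q1 q2 q3) (Rot1 u v)) (trans x) k 0%nat = sg * Fm c s cp sp k 0%nat.
Proof. intros H1 H2 H3 H4 H5 H6 H7 k Hk. lt7 k; cbv [mmul trans sum7 sum_f_R0 Lq Rot1 Fm]; lra. Qed.

Lemma inH_hT u v q0 q1 q2 q3 : u*u+v*v = 1 -> q0*q0+q1*q1+q2*q2+q3*q3 = 1 ->
  inH (trans (mmul (Lq q0 q1 q2 q3) (Rot1 u v))).
Proof. intros Hu Hq. apply (inH_ext (mmul (Rot1 u (-v)) (Lq q0 (-q1) (-q2) (-q3)))).
- rewrite trans_mmul. apply eq7_sym. eapply eq7_trans. apply mmul_eq7_l.
  instantiate (1 := Rot1 u (-v)). intros i j Hi Hj. unfold trans, Rot1. lt7 i; lt7 j; ring.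
  apply mmul_eq7_r. intros i j Hi Hj. unfold trans, Lq. lt7 i; lt7 j; ring.
- split; [apply inG_mmul; [apply R1_inG; lra | apply Lq_inG; lra]|]. split.
  + intros r Hr H1 H2. lt7 r; try lia; cbv [mmul sum7 sum_f_R0 Lq Rot1]; split; ring.
  + cbv [mmul sum7 sum_f_R0 Lq Rot1].
    match goal with |- ?e > 0 => replace e with (u*u+v*v) by ring end. lra. Qed.

Lemma sum7_scal c f : sum7 (fun k => c * f k) = c * sum7 f.
Proof. unfold sum7. cbn [sum_f_R0]. ring. Qed.

Lemma construct (x : Mat) : inG x -> exists a, good a /\ exists th ph, 0 <= th <= PI/2 /\ 0 <= ph <= PI/2 /\
  cls (mmul a x) (piGH (Fmat th ph) ident).
Proof. intros hx. destruct (inG_orth x hx) as [Ox1 Ox2].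
assert (Hw : x 0%nat 0%nat * x 0%nat 0%nat + x 0%nat 1%nat * x 0%nat 1%nat + x 0%nat 2%nat * x 0%nat 2%nat +
   x 0%nat 3%nat * x 0%nat 3%nat + x 0%nat 4%nat * x 0%nat 4%nat + x 0%nat 5%nat * x 0%nat 5%nat + x 0%nat 6%nat * x 0%nat 6%nat = 1).
{ pose proof (Ox2 0%nat 0%nat ltac:(lia) ltac:(lia)) as E. cbv [mmul trans sum7 sum_f_R0 ident Nat.eqb] in E. lra. }
assert (Hsg : exists sg, sg * sg = 1 /\ 0 <= sg * x 0%nat 0%nat).
{ destruct (Rle_dec 0 (x 0%nat 0%nat)). exists 1; split; lra. exists (-1); split; lra. }
destruct Hsg as [sg [Hsg Hsg0]].
destruct (choose_uv (x 0%nat 1%nat) (x 0%nat 2%nat) sg Hsg) as [u [v [r [Hu [Hr0 [Hr [Hu1 Hu2]]]]]]].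
destruct (choose_q (x 0%nat 3%nat) (x 0%nat 4%nat) (u * x 0%nat 5%nat - v * x 0%nat 6%nat) (v * x 0%nat 5%nat + u * x 0%nat 6%nat) sg Hsg)
  as [q0 [q1 [q2 [q3 [m [Hq [Hm0 [Hm [Hq0 [Hq1 [Hq2 Hq3]]]]]]]]]]].
set (c := sg * x 0%nat 0%nat).
assert (Hcm : c * c + r * r + m * m = 1).
{ unfold c. rewrite Hr, Hm.
  assert (E : (u * x 0%nat 5%nat - v * x 0%nat 6%nat) * (u * x 0%nat 5%nat - v * x 0%nat 6%nat) +
    (v * x 0%nat 5%nat + u * x 0%nat 6%nat) * (v * x 0%nat 5%nat + u * x 0%nat 6%nat)
  = (u*u+v*v) * (x 0%nat 5%nat * x 0%nat 5%nat + x 0%nat 6%nat * x 0%nat 6%nat)) by ring.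
  rewrite Hu in E.
  assert (E2 : sg * x 0%nat 0%nat * (sg * x 0%nat 0%nat) = sg*sg * (x 0%nat 0%nat * x 0%nat 0%nat)) by ring.
  rewrite Hsg in E2. lra. }
assert (Hc1 : 0 <= c <= 1) by (unfold c in *; nra).
destruct (angles c r m Hc1 Hr0 Hm0 Hcm) as [th [ph [Hth [Hph [Hct [Hcr Hcm']]]]]].
set (F := Fm (cos th) (sin th) (cos ph) (sin ph)).
assert (HF : inG F).
{ apply Fm_inG; pose proof (sin2_cos2 th); pose proof (sin2_cos2 ph); unfold Rsqr in *; lra. }
destruct (inG_orth F HF) as [OF1 OF2].
set (h := mmul (Lq q0 q1 q2 q3) (Rot1 u v)).
assert (Hh : inG h) by (apply inG_mmul; [apply Lq_inG | apply R1_inG]; auto).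
assert (Hcol : forall k, (k < 7)%nat -> mmul h (trans x) k 0%nat = sg * F k 0%nat).
{ apply hx_col.
  - rewrite Hu1, Hcr. ring.
  - auto.
  - rewrite Hq0, Hcm'. ring.
  - auto. - auto. - auto.
  - rewrite Hct. unfold c. replace (sg * (sg * x 0%nat 0%nat)) with (sg*sg*x 0%nat 0%nat) by ring. rewrite Hsg. ring. }
set (a := mmul (trans F) (mmul h (trans x))).
assert (Ha : inG a) by (apply inG_mmul; [apply inG_trans; auto | apply inG_mmul; [auto | apply inG_trans; auto]]).
assert (Hac : forall k, (k < 7)%nat -> a k 0%nat = sg * ident k 0%nat).
{ intros k Hk. unfold a. unfold mmul at 1.
  rewrite (sum7_ext _ (fun j => sg * (trans F k j * F j 0%nat))) by (intros j Hj; rewrite Hcol by auto; ring).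
  rewrite sum7_scal. f_equal. apply OF1; lia. }
assert (Har : forall k, (k < 7)%nat -> a 0%nat k = sg * ident 0%nat k).
{ intros k Hk. destruct (inG_orth a Ha) as [Oa1 _]. pose proof (Oa1 k 0%nat Hk ltac:(lia)) as E.
  unfold mmul, trans in E. rewrite (sum7_ext _ (fun j => a j k * (sg * ident j 0%nat))) in E by (intros j Hj; rewrite Hac by auto; reflexivity).
  set (rhs := ident k 0%nat) in E.
  unfold sum7, ident in E. cbn [sum_f_R0 Nat.eqb] in E.
  assert (E2 : a 0%nat k * sg = rhs) by lra. unfold rhs in E2.
  assert (ident 0%nat k = ident k 0%nat) as E3 by (unfold ident; rewrite Nat.eqb_sym; reflexivity).
  rewrite E3, <- E2. replace (sg * (a 0%nat k * sg)) with (sg * sg * a 0%nat k) by ring. rewrite Hsg. ring. }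
exists a. split.
{ split; auto. exists sg. split. nra. intros k Hk. split; auto. }
exists th, ph. split; auto. split; auto.
unfold cls, piGH. rewrite Fmat_Fm. fold F.
apply (inH_ext (trans h)); [|apply inH_hT; auto].
unfold a. rewrite !trans_mmul, !trans_trans, !mmul_assoc.
apply eq7_sym. eapply eq7_trans. apply cancel_l. exact Ox1.
eapply eq7_trans. apply mmul_eq7_r, cancel_l, OF2. apply mmul_ident_r. Qed.

Theorem mainTheorem10 (t : R) (ht : 0 < t) (x : Mat) (hx : inG x) :
  exists f : Mat -> Mat, isometryGH t f /\
    exists g' : Mat, inF g' /\ cls (f x) (piGH g' ident).
Proof. destruct (construct x hx) as [a [Ha [th [ph [Hth [Hph Hc]]]]]].
exists (mmul a). split. apply isometry_good; auto.
exists (Fmat th ph). split; auto. exists th, ph. auto. Qed.
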